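(* Let $(V,\omega)$ be a vertex operator algebra. Then the set $\operatorname{Sc}(V,\omega)$ of semi-conformal vectors of $(V,\omega)$ is a Zariski closed subset of the finite-dimensional complex vector space $V_2$; in particular it is an affine algebraic variety over $\mathbb{C}$.
   Context: A vertex operator algebra $(V,Y,\mathbf 1,\omega)$ is $\mathbb Z$-graded, $V=\bigoplus_n V_n$, by the eigenvalues of $L(0)$, where $Y(\omega,z)=\sum_n L(n)z^{-n-2}$; each $V_n$ is finite dimensional and $V_n=0$ for $n\ll 0$. Write $Y(v,z)=\sum_n v_nz^{-n-1}$. A vertex operator subalgebra $(U,\omega')$ of $(V,\omega)$ is a vertex subalgebra $U\ni\mathbf 1$ together with a vector $\omega'\in U$ making $(U,Y|_U,\mathbf 1,\omega')$ a vertex operator algebra (the conformal vector $\omega'$ may differ from $\omega$). It is called semi-conformal if $L(n)|_U=L'(n)|_U$ for all $n\ge 0$, where $Y(\omega',z)=\sum_n L'(n)z^{-n-2}$ (equivalently $\omega_n|_U=\omega'_n|_U$ for all $n\ge 0$). A semi-conformal vector of $(V,\omega)$ is a vector $\omega'\in V_2$ which is the conformal vector of some semi-conformal vertex operator subalgebra. $\operatorname{Sc}(V,\omega)$ denotes the set of all semi-conformal vectors. *)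

(* Defs.v *)
From HB Require Import structures.
From mathcomp Require Import all_boot all_order all_algebra.
Set Implicit Arguments. Unset Strict Implicit. Unset Printing Implicit Defensive.
Import Order.TTheory GRing.Theory Num.Theory.
Local Open Scope ring_scope.

Section VOA.
Variable F : fieldType.
Variable V : lmodType F.
(* mode v n w = v_n w, where Y(v,z) = \sum_n v_n z^{-n-1} *)
Variable mode : V -> int -> V -> V.

Definition subspace (U : V -> Prop) :=
  U 0 /\ forall (a : F) x y, U x -> U y -> U (a *: x + y).

Definition fin_dim (P : V -> Prop) :=
  exists s : seq V, forall v, P v ->
    exists c : 'I_(size s) -> F, v = \sum_(i < size s) c i *: s`_i.

Definition binz (p : int) (i : nat) : F :=
  (\prod_(k < i) ((p - (k : nat)%:Z)%:~R : F)) / (i`!)%:R.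

Definition Lop (om : V) (n : int) (v : V) : V := mode om (n + 1) v.

(* Borcherds (Jacobi) identity on U; the sums are finite by truncation,
   expressed as: partial sums agree for all sufficiently large bounds. *)
Definition borcherds (U : V -> Prop) :=
  forall u v w, U u -> U v -> U w -> forall p q r : int,
  exists N : nat, forall M : nat, (N <= M)%N ->
    \sum_(i < M) binz p i *: mode (mode u (r + (i : nat)%:Z) v) (p + q - (i : nat)%:Z) w =
    \sum_(i < M) ((-1) ^+ i * binz r i) *:
       (mode u (p + r - (i : nat)%:Z) (mode v (q + (i : nat)%:Z) w)
        - (-1) ^ r *: mode v (q + r - (i : nat)%:Z) (mode u (p + (i : nat)%:Z) w)).

Record is_VOA (U : V -> Prop) (vac om : V) : Prop := {
  voa_subspace : subspace U;
  voa_vac : U vac;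
  voa_om : U om;
  voa_closed : forall u n v, U u -> U v -> U (mode u n v);
  voa_lin_l : forall (a : F) u1 u2 n v, U u1 -> U u2 -> U v ->
     mode (a *: u1 + u2) n v = a *: mode u1 n v + mode u2 n v;
  voa_lin_r : forall (a : F) u n v1 v2, U u -> U v1 -> U v2 ->
     mode u n (a *: v1 + v2) = a *: mode u n v1 + mode u n v2;
  voa_trunc : forall u v, U u -> U v ->
     exists N : int, forall n, N <= n -> mode u n v = 0;
  voa_vacuum : forall n v, U v -> mode vac n v = if n == -1 then v else 0;
  voa_creation : forall v, U v ->
     mode v (-1) vac = v /\ (forall n : int, 0 <= n -> mode v n vac = 0);
  voa_borcherds : borcherds U;
  voa_virasoro : exists c : F, forall (m n : int) v, U v ->
     Lop om m (Lop om n v) - Lop om n (Lop om m v) =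
       (m - n)%:~R *: Lop om (m + n) v
       + (if m + n == 0 then (m ^+ 3 - m)%:~R / 12%:R * c else 0) *: v;
  voa_deriv : forall v w (n : int), U v -> U w ->
     mode (Lop om (-1) v) n w = - (n%:~R) *: mode v (n - 1) w;
  voa_grading : forall v, U v -> exists s : seq (int * V),
     v = \sum_(x <- s) x.2 /\
     (forall x, x \in s -> U x.2 /\ Lop om 0 x.2 = (x.1)%:~R *: x.2);
  voa_findim : forall n : int,
     fin_dim (fun v => U v /\ Lop om 0 v = n%:~R *: v);
  voa_bounded : exists N : int, forall (n : int) v,
     n < N -> U v -> Lop om 0 v = n%:~R *: v -> v = 0
}.

Definition semi_conformal_sub (vac om : V) (U : V -> Prop) (om' : V) :=
  is_VOA U vac om' /\
  forall u (n : int), U u -> 0 <= n -> mode om n u = mode om' n u.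

Definition Sc (vac om : V) (om' : V) :=
  Lop om 0 om' = 2%:R *: om' /\ exists U : V -> Prop, semi_conformal_sub vac om U om'.

Inductive polyfun : (V -> F) -> Prop :=
| pf_const (c : F) : polyfun (fun _ => c)
| pf_lin (phi : V -> F) :
    (forall (a : F) x y, phi (a *: x + y) = a * phi x + phi y) -> polyfun phi
| pf_add f g : polyfun f -> polyfun g -> polyfun (fun x => f x + g x)
| pf_mul f g : polyfun f -> polyfun g -> polyfun (fun x => f x * g x).

Definition zariski_closed_in (D S : V -> Prop) :=
  exists (n : nat) (fs : 'I_n -> V -> F),
    (forall i, polyfun (fs i)) /\
    forall x, S x <-> (D x /\ forall i, fs i x = 0).

End VOA.

(* Main.v *)
Require Import Defs.
From HB Require Import structures.
From mathcomp Require Import all_boot all_order all_algebra.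
Import GRing.Theory Num.Theory.
Local Open Scope ring_scope.
From mathcomp Require Import zify ring lra.
From Stdlib Require Import ClassicalEpsilon Classical FunctionalExtensionality.
Set Implicit Arguments. Unset Strict Implicit. Unset Printing Implicit Defensive.

Section LinAlg.
Variable K : fieldType.
Variable W : lmodType K.
Variable m : nat.
Variable t : 'I_m -> W.

Definition vec (c : 'rV[K]_m) : W := \sum_(i < m) c 0 i *: t i.
Definition Kp c := vec c = 0.

Lemma vec_lin a c d : vec (a *: c + d) = a *: vec c + vec d.
Proof.
rewrite /vec scaler_sumr -big_split /=; apply: eq_bigr => i _.
by rewrite !mxE scalerDl scalerA.
Qed.
Lemma vec0 : vec 0 = 0.
Proof. by rewrite /vec big1 // => i _; rewrite mxE scale0r. Qed.
Lemma vecB c d : vec (c - d) = vec c - vec d.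
Proof. by rewrite -scaleN1r -[c - _]/(c + - d) addrC -scaleN1r vec_lin addrC scaleN1r. Qed.

Lemma vec_mul n (D : 'M_(1, n)) (A : 'M_(n, m)) :
  vec (D *m A) = \sum_(j < n) D 0 j *: vec (row j A).
Proof.
rewrite /vec; under eq_bigr do rewrite mxE scaler_suml.
rewrite exchange_big /=; apply: eq_bigr => j _; rewrite scaler_sumr.
by apply: eq_bigr => i _; rewrite mxE scalerA.
Qed.

Lemma Kp_sub n (A : 'M_(n, m)) x : (forall i, Kp (row i A)) -> (x <= A)%MS -> Kp x.
Proof.
move=> hA /submxP[D ->]; rewrite /Kp vec_mul big1 // => j _.
by rewrite hA scaler0.
Qed.

Lemma Kp_row (c : 'rV[K]_m) : Kp c -> forall i, Kp (row i c).
Proof. by move=> h i; rewrite (ord1 i); have -> : row 0 c = c by apply/rowP => j; rewrite mxE. Qed.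

Lemma vecD c d : vec (c + d) = vec c + vec d.
Proof. by have := vec_lin 1 c d; rewrite !scale1r. Qed.

Lemma Kp_adds n (B : 'M_(n, m)) (c : 'rV_m) x : (forall i, Kp (row i B)) -> Kp c ->
  (x <= B + c)%MS -> Kp x.
Proof.
move=> hB hc /sub_addsmxP[[u1 u2] ->] /=.
rewrite /Kp vecD.
have -> : vec (u1 *m B) = 0 by apply: (Kp_sub hB); apply: submxMl.
have -> : vec (u2 *m c) = 0 by apply: (Kp_sub (Kp_row hc)); apply: submxMl.
by rewrite addr0.
Qed.

Lemma kerB : exists B : 'M[K]_m, (forall i, Kp (row i B)) /\ forall c, Kp c -> (c <= B)%MS.
Proof.
suff H : forall d (B : 'M[K]_m), (forall i, Kp (row i B)) -> (m - \rank B <= d)%N ->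
  exists B : 'M[K]_m, (forall i, Kp (row i B)) /\ forall c, Kp c -> (c <= B)%MS.
  apply: (H m 0); last exact: leq_subr.
  by move=> i; rewrite row0 /Kp vec0.
elim=> [|d IH] B hB hd.
  exists B; split => // c _; apply: submx_full.
  rewrite -col_leq_rank; move: hd (rank_leq_col B); lia.
case: (classic (forall c, Kp c -> (c <= B)%MS)) => [h|]; first by exists B.
move=> /not_all_ex_not [c hc]; have [kc nc] := imply_to_and _ _ hc.
apply: (IH (B + c)%MS).
  by move=> i; apply: (Kp_adds hB kc); apply: row_sub.
have lt : (B < B + c)%MS.
  rewrite ltmxE addsmxSl /=; apply/negP => h; apply: nc.
  exact: submx_trans (addsmxSr B c) h.
move: (rank_ltmx lt) (rank_leq_col (B + c)%MS) hd; lia.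
Qed.

Definition inspan w := exists c, w = vec c.

Lemma lincoord : exists phi : ('I_m -> W -> K),
  (forall j a x y, inspan x -> inspan y -> phi j (a *: x + y) = a * phi j x + phi j y) /\
  (forall w, inspan w -> w = \sum_(j < m) phi j w *: t j).
Proof.
have [B [hB hK]] := kerB.
pose coef w := epsilon (inhabits (0 : 'rV[K]_m)) (fun c => w = vec c).
have coefP : forall w, inspan w -> w = vec (coef w).
  by move=> w hw; apply: (epsilon_spec _ (fun c => w = vec c)).
pose C := (B^C)%MS.
have CB : (C :&: B = 0)%MS by rewrite capmxC capmx_compl.
have full : forall u : 'rV_m, (u <= C + B)%MS.
  by move=> u; apply: submx_full; rewrite addsmxC addsmx_compl_full.
pose lc w := coef w *m proj_mx C B.
have lcP : forall w, inspan w -> w = vec (lc w).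
  move=> w hw; have := add_proj_mx CB (full (coef w)).
  move=> /(congr1 vec); rewrite vecD.
  have -> : vec (coef w *m proj_mx B C) = 0.
    by apply: (Kp_sub hB); apply: proj_mx_sub.
  by rewrite addr0 -coefP.
exists (fun j w => lc w 0 j); split; last first.
  by move=> w hw; rewrite {1}(lcP w hw).
move=> j a x y hx hy.
have hxy : inspan (a *: x + y).
  case: hx => cx ->; case: hy => cy ->; exists (a *: cx + cy); by rewrite vec_lin.
set d := coef (a *: x + y) - (a *: coef x + coef y).
have kd : Kp d.
  rewrite /Kp /d vecB vec_lin -!coefP //; exact: subrr.
have hd : d *m proj_mx C B = 0 by apply: proj_mx_0 => //; apply: hK.
have : lc (a *: x + y) = a *: lc x + lc y.
  apply/eqP; rewrite -subr_eq0; apply/eqP.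
  by rewrite /lc scalemxAl -mulmxDl -mulmxBl.
by move=> ->; rewrite !mxE.
Qed.
End LinAlg.

Section ZC.
Variable F : fieldType.
Variable V : lmodType F.

Lemma pf_sum n (f : 'I_n -> V -> F) : (forall i, polyfun (f i)) ->
  polyfun (fun x => \sum_(i < n) f i x).
Proof.
elim: n f => [|n IH] f hf.
  have -> : (fun x => \sum_(i < 0) f i x) = (fun _ => 0).
    by apply: functional_extensionality => x; rewrite big_ord0.
  exact: pf_const.
have -> : (fun x => \sum_(i < n.+1) f i x) =
          (fun x => (fun y => \sum_(i < n) f (widen_ord (leqnSn n) i) y) x + f ord_max x).
  by apply: functional_extensionality => x; rewrite big_ord_recr.
apply: pf_add; last exact: hf.
by apply: IH => i; apply: hf.
Qed.

Lemma zc_ext (D S S' : V -> Prop) : (forall x, S x <-> S' x) ->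
  zariski_closed_in D S -> zariski_closed_in D S'.
Proof.
move=> h [n [fs [hp hS]]]; exists n, fs; split => // x.
by rewrite -h.
Qed.

Lemma zc_triv (D : V -> Prop) : zariski_closed_in D D.
Proof.
exists 0%N, (fun _ _ => 0); split; first by move=> i; apply: pf_const.
by move=> x; split => [h|[]//]; split => // [[]].
Qed.

Lemma zc_and (D S1 S2 : V -> Prop) : zariski_closed_in D S1 ->
  zariski_closed_in D S2 -> zariski_closed_in D (fun x => S1 x /\ S2 x).
Proof.
move=> [n1 [f1 [p1 h1]]] [n2 [f2 [p2 h2]]].
exists (n1 + n2)%N, (fun i => match split i with inl a => f1 a | inr b => f2 b end).
split.
  by move=> i; case: (split i) => [a|b]; [apply: p1 | apply: p2].
move=> x; rewrite h1 h2; split.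
  move=> [[Dx H1] [_ H2]]; split => // i; case: (split i) => [a|b]; [apply: H1 | apply: H2].
move=> [Dx H]; split; split => // i.
  by have := H (unsplit (inl i)); rewrite unsplitK.
by have := H (unsplit (inr i)); rewrite unsplitK.
Qed.

Lemma zc_all (D : V -> Prop) (S : nat -> V -> Prop) N :
  (forall n, zariski_closed_in D (S n)) ->
  zariski_closed_in D (fun x => D x /\ forall n, (n < N)%N -> S n x).
Proof.
move=> hS; elim: N => [|N IH].
  by apply: zc_ext (zc_triv D) => x; split => [h|[]//]; split.
apply: zc_ext (zc_and IH (hS N)) => x; split.
  move=> [[Dx H] HN]; split => // n; rewrite ltnS leq_eqVlt => /orP[/eqP ->|] //.
  exact: H.
by move=> [Dx H]; split; [split => // n hn; apply: H; lia | apply: H].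
Qed.
End ZC.

Section VOAproof.
Variable F : numClosedFieldType.
Variable V : lmodType F.
Variable mode : V -> int -> V -> V.
Variables vac om : V.
Hypothesis HV : is_VOA mode (fun _ => True) vac om.

Lemma linl a u1 u2 n v : mode (a *: u1 + u2) n v = a *: mode u1 n v + mode u2 n v.
Proof. exact: (voa_lin_l HV). Qed.
Lemma linr a u n v1 v2 : mode u n (a *: v1 + v2) = a *: mode u n v1 + mode u n v2.
Proof. exact: (voa_lin_r HV). Qed.

Lemma mode0l n v : mode 0 n v = 0.
Proof.
have := linl 1 0 0 n v; rewrite !scale1r addr0 => h.
by apply: (addrI (mode 0 n v)); rewrite addr0 -h.
Qed.
Lemma mode0r u n : mode u n 0 = 0.
Proof.
have := linr 1 u n 0 0; rewrite !scale1r addr0 => h.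
by apply: (addrI (mode u n 0)); rewrite addr0 -h.
Qed.
Lemma modeDl u1 u2 n v : mode (u1 + u2) n v = mode u1 n v + mode u2 n v.
Proof. by have := linl 1 u1 u2 n v; rewrite !scale1r. Qed.
Lemma modeZl a u n v : mode (a *: u) n v = a *: mode u n v.
Proof. by have := linl a u 0 n v; rewrite !addr0 mode0l addr0. Qed.
Lemma modeDr u n v1 v2 : mode u n (v1 + v2) = mode u n v1 + mode u n v2.
Proof. by have := linr 1 u n v1 v2; rewrite !scale1r. Qed.
Lemma modeZr a u n v : mode u n (a *: v) = a *: mode u n v.
Proof. by have := linr a u n v 0; rewrite !addr0 mode0r addr0. Qed.
Lemma modeNl u n v : mode (- u) n v = - mode u n v.
Proof. by rewrite -scaleN1r modeZl scaleN1r. Qed.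
Lemma modeNr u n v : mode u n (- v) = - mode u n v.
Proof. by rewrite -scaleN1r modeZr scaleN1r. Qed.
Lemma modeBl u1 u2 n v : mode (u1 - u2) n v = mode u1 n v - mode u2 n v.
Proof. by rewrite modeDl modeNl. Qed.
Lemma modeBr u n v1 v2 : mode u n (v1 - v2) = mode u n v1 - mode u n v2.
Proof. by rewrite modeDr modeNr. Qed.
Lemma mode_suml (I : Type) (r : seq I) (P : pred I) (f : I -> V) n v :
  mode (\sum_(i <- r | P i) f i) n v = \sum_(i <- r | P i) mode (f i) n v.
Proof.
apply: (big_rec2 (fun x y => mode x n v = y)); first exact: mode0l.
by move=> i x y _ <-; rewrite modeDl.
Qed.
Lemma mode_sumr (I : Type) (r : seq I) (P : pred I) (f : I -> V) u n :
  mode u n (\sum_(i <- r | P i) f i) = \sum_(i <- r | P i) mode u n (f i).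
Proof.
apply: (big_rec2 (fun x y => mode u n x = y)); first exact: mode0r.
by move=> i x y _ <-; rewrite modeDr.
Qed.

Lemma binz0 p : binz F p 0 = 1.
Proof. by rewrite /binz big_ord0 fact0 divr1. Qed.
Lemma binz_0S i : binz F 0 i.+1 = 0.
Proof. by rewrite /binz big_ord_recl /= subr0 mul0r mul0r. Qed.
Lemma binz1 p : binz F p 1 = p%:~R.
Proof. by rewrite /binz big_ord_recl big_ord0 /= subr0 mulr1 divr1. Qed.
Lemma binz_1SS i : binz F 1 i.+2 = 0.
Proof. by rewrite /binz big_ord_recl big_ord_recl /= subrr mul0r mulr0 mul0r. Qed.

Lemma comm u v w p q : exists N, forall M, (N <= M)%N ->
  \sum_(i < M) binz F p i *: mode (mode u (i : nat)%:Z v) (p + q - (i : nat)%:Z) w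
  = mode u p (mode v q w) - mode v q (mode u p w).
Proof.
have [N hN] := voa_borcherds HV (u:=u) (v:=v) (w:=w) I I I p q 0.
exists (maxn N 1) => M hM.
have := hN M (leq_trans (leq_maxl _ _) hM).
under eq_bigr do rewrite add0r.
move=> ->.
case: M hM => [|M] hM; first by rewrite geq_max in hM; case/andP: hM.
rewrite big_ord_recl big1 ?addr0; last first.
  by move=> i _; rewrite lift0 binz_0S mulr0 scale0r.
by rewrite expr0 binz0 mulr1 scale1r expr0z scale1r.
Qed.

Definition E (n : int) (v : V) := mode om 1 v = n%:~R *: v.

Lemma L0E v : Lop mode om 0 v = mode om 1 v.
Proof. by rewrite /Lop add0r. Qed.

Lemma deriv0 v n w : mode (mode om 0 v) n w = - (n%:~R) *: mode v (n - 1) w.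
Proof. by have := voa_deriv HV (v:=v) (w:=w) n I I; rewrite /Lop addNr. Qed.

Lemma wt u v (k n : int) : E k u ->
  mode om 1 (mode u n v) = (k - n - 1)%:~R *: mode u n v + mode u n (mode om 1 v).
Proof.
move=> Eu.
have [N hN] := comm om u v 1 n.
have := hN N.+2 (leqW (leqnSn N)).
rewrite big_ord_recl big_ord_recl big1; last first.
  by move=> i _; rewrite !lift0 binz_1SS scale0r.
rewrite addr0 /= binz0 binz1 scale1r Eu deriv0 modeZl.
move/eqP; rewrite eq_sym subr_eq => /eqP ->.
rewrite /bump /= addr0.
have -> : (1 + n - 1%:Z) = n by lia.
rewrite scale1r -scalerDl; congr (_ *: _ + _).
rewrite -intrN -intrD; congr (_%:~R); lia.
Qed.

Lemma E0 n : E n 0.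
Proof. by rewrite /E mode0r scaler0. Qed.
Lemma E_lin n a x y : E n x -> E n y -> E n (a *: x + y).
Proof. by rewrite /E modeDr modeZr => -> ->; rewrite scalerDr !scalerA mulrC. Qed.
Lemma E_add n x y : E n x -> E n y -> E n (x + y).
Proof. by move=> h1 h2; have := E_lin 1 h1 h2; rewrite scale1r. Qed.
Lemma E_scale n a x : E n x -> E n (a *: x).
Proof. by move=> h; have := E_lin a h (E0 n); rewrite addr0. Qed.
Lemma E_sum n (I : Type) (r : seq I) (P : pred I) (f : I -> V) :
  (forall i, P i -> E n (f i)) -> E n (\sum_(i <- r | P i) f i).
Proof.
move=> h; apply: (big_rec (E n)); first exact: E0.
by move=> i x Pi Ex; apply: E_add => //; apply: h.
Qed.

Lemma distinct (W : seq int) (g : int -> V) : uniq W ->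
  (forall n, n \in W -> E n (g n)) -> \sum_(n <- W) g n = 0 ->
  forall n, n \in W -> g n = 0.
Proof.
elim: W g => [|a W IH] g //= /andP[aW uW] hE.
rewrite big_cons => hs.
set g' := fun n => (n - a)%:~R *: g n.
have hs' : \sum_(n <- W) g' n = 0.
  have h1 : mode om 1 (g a + \sum_(n <- W) g n) - a%:~R *: (g a + \sum_(n <- W) g n) = 0.
    by rewrite hs mode0r scaler0 subr0.
  rewrite -[X in _ = X]h1 modeDr mode_sumr scalerDr hE ?mem_head //.
  rewrite addrAC opprD addrA subrr add0r scaler_sumr addrC -sumrB.
  apply: eq_big_seq => n nW; rewrite /g' hE ?inE ?nW ?orbT //.
  by rewrite intrB scalerBl.
have hE' : forall n, n \in W -> E n (g' n).
  move=> n nW; rewrite /g'; apply: E_scale; apply: hE; by rewrite inE nW orbT.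
have hg' : forall n, n \in W -> g n = 0.
  move=> n nW; have /eqP := IH g' uW hE' hs' n nW.
  rewrite scaler_eq0 intr_eq0 subr_eq0 => /orP[/eqP na|/eqP //].
  by move: aW; rewrite -na nW.
move=> n; rewrite inE => /orP[/eqP ->|]; last exact: hg'.
move: hs; rewrite big1_seq ?addr0 //.
Qed.

Lemma sum_ind1 (W : seq int) (a : int) (y : V) : uniq W -> a \in W ->
  \sum_(n <- W) (if a == n then y else 0) = y.
Proof.
move=> uW aW; rewrite (big_rem a aW) /= eqxx big1_seq ?addr0 //.
move=> n /andP[_ nW]; case: eqP => // an; move: nW; rewrite -an.
by rewrite mem_rem_uniqF.
Qed.

Lemma part (s : seq (int * V)) (W : seq int) : uniq W ->
  {subset map fst s <= W} ->
  \sum_(x <- s) x.2 = \sum_(n <- W) \sum_(x <- s | x.1 == n) x.2.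
Proof.
move=> uW; elim: s => [|x s IH] sub.
  by rewrite big_nil big1 // => n _; rewrite big_nil.
rewrite big_cons IH; last by move=> y ys; apply: sub; rewrite /= inE ys orbT.
have xW : x.1 \in W by apply: sub; rewrite /= inE eqxx.
under [X in _ = X]eq_bigr do rewrite big_cons.
rewrite -[X in X + _](sum_ind1 x.2 uW xW) -big_split /=.
by apply: eq_bigr => n _; case: eqP => _; rewrite ?add0r.
Qed.

Definition isdec (v : V) (s : seq (int * V)) :=
  v = \sum_(x <- s) x.2 /\ forall x, x \in s -> E x.1 x.2.

Lemma dec_ex v : exists s, isdec v s.
Proof.
have [s [h1 h2]] := voa_grading HV (v:=v) I.
exists s; split => // x xs; have [_] := h2 x xs; by rewrite L0E.
Qed.

Definition dec (v : V) : seq (int * V) :=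
  proj1_sig (constructive_indefinite_description _ (dec_ex v)).
Lemma decP v : isdec v (dec v).
Proof. exact: proj2_sig (constructive_indefinite_description _ (dec_ex v)). Qed.

Definition P (n : int) (v : V) := \sum_(x <- dec v | x.1 == n) x.2.

Lemma isdec0 s : isdec 0 s -> forall n, \sum_(x <- s | x.1 == n) x.2 = 0.
Proof.
move=> [h0 hE] n.
set W := undup (map fst s).
have uW : uniq W by apply: undup_uniq.
have sW : {subset map fst s <= W} by move=> y; rewrite mem_undup.
have hp := part uW sW; rewrite -h0 in hp.
have hd := distinct uW _ (esym hp).
case nW : (n \in W).
  apply: hd => //= m _; rewrite big_seq_cond; apply: E_sum => x /andP[xs /eqP <-].
  exact: hE.
apply: big1_seq => x /andP[/eqP xn xs]; move: nW.
by rewrite -xn mem_undup (map_f fst xs).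
Qed.

Lemma E_opp n x : E n x -> E n (- x).
Proof. by move=> h; rewrite -scaleN1r; apply: E_scale. Qed.

Lemma P_any v s n : isdec v s -> P n v = \sum_(x <- s | x.1 == n) x.2.
Proof.
move=> [hv hs].
have [hv0 hs0] := decP v.
set s1 := dec v ++ [seq (x.1, - x.2) | x <- s].
have d1 : isdec 0 s1.
  split.
    by rewrite big_cat big_map /= sumrN -hv -hv0 subrr.
  move=> x; rewrite mem_cat => /orP[xd|]; first exact: hs0.
  by case/mapP => y ys ->; apply: E_opp; apply: hs.
have := isdec0 d1 n.
rewrite big_cat big_map /= sumrN => /eqP; rewrite subr_eq0 => /eqP.
by rewrite /P.
Qed.

Lemma P_lin n a v w : P n (a *: v + w) = a *: P n v + P n w.
Proof.
set s := [seq (x.1, a *: x.2) | x <- dec v] ++ dec w.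
have [hv hvE] := decP v; have [hw hwE] := decP w.
have ds : isdec (a *: v + w) s.
  split.
    by rewrite big_cat big_map /= -scaler_sumr -hv -hw.
  move=> x; rewrite mem_cat => /orP[|xd]; last exact: hwE.
  by case/mapP => y ys ->; apply: E_scale; apply: hvE.
by rewrite (P_any n ds) big_cat big_map /= -scaler_sumr.
Qed.

Lemma P_E n v : E n (P n v).
Proof.
have [_ hE] := decP v.
rewrite /P big_seq_cond; apply: E_sum => x /andP[xs /eqP <-]; exact: hE.
Qed.

Lemma P_id n v : E n v -> P n v = v.
Proof.
move=> hv; have ds : isdec v [:: (n, v)].
  by split; [rewrite big_seq1 | move=> x; rewrite inE => /eqP ->].
by rewrite (P_any n ds) big_cons big_nil /= eqxx addr0.
Qed.

Lemma P_sum n (I : Type) (r : seq I) (f : I -> V) :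
  P n (\sum_(i <- r) f i) = \sum_(i <- r) P n (f i).
Proof.
apply: (big_rec2 (fun x y => P n x = y)).
  exact: P_id (E0 n).
by move=> i x y _ <-; have := P_lin n 1 (f i) x; rewrite !scale1r.
Qed.

Lemma P_scale n a v : P n (a *: v) = a *: P n v.
Proof. by have := P_lin n a v 0; rewrite !addr0 (P_id (E0 n)) addr0. Qed.

Lemma coord n : exists m (t : 'I_m -> V) (phi : 'I_m -> V -> F),
  (forall j a x y, phi j (a *: x + y) = a * phi j x + phi j y) /\
  (forall j, E n (t j)) /\
  (forall v, E n v -> v = \sum_(j < m) phi j v *: t j).
Proof.
have [s hs] := voa_findim HV n.
pose t (j : 'I_(size s)) := P n s`_j.
have span : forall v, E n v -> inspan t v.
  move=> v hv; have [c hc] := hs v (conj I (etrans (L0E v) hv)).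
  exists (\row_i c i); rewrite /vec -(P_id hv) hc P_sum.
  by apply: eq_bigr => i _; rewrite mxE P_scale.
have [phi [hlin hrec]] := lincoord t.
exists (size s), t, (fun j v => phi j (P n v)); split; last split.
- move=> j a x y; rewrite P_lin; apply: hlin; apply: span; exact: P_E.
- move=> j; exact: P_E.
- by move=> v hv; rewrite {1}(hrec v (span v hv)) (P_id hv).
Qed.

Lemma Lop0 w v : Lop mode w 0 v = mode w 1 v.
Proof. by rewrite /Lop add0r. Qed.

Lemma wtE a b n u v : E a u -> E b v -> E (a + b - n - 1) (mode u n v).
Proof.
move=> hu hv; rewrite /E (wt _ _ hu) hv modeZr -scalerDl; congr (_ *: _).
by rewrite -intrD; congr (_%:~R); lia.
Qed.

Lemma vacE : E 0 vac.
Proof. by rewrite /E scale0r; have [_ h] := voa_creation HV (v:=om) I; apply: h. Qed.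

Inductive gen (x : V) : V -> Prop :=
| g_vac : gen x vac
| g_x : gen x x
| g_lin a u v : gen x u -> gen x v -> gen x (a *: u + v)
| g_mode u n v : gen x u -> gen x v -> gen x (mode u n v).

Lemma gen0 x : gen x 0.
Proof. by have := g_lin (-1) (g_vac x) (g_vac x); rewrite scaleN1r addNr. Qed.
Lemma gen_scale x a u : gen x u -> gen x (a *: u).
Proof. by move=> h; have := g_lin a h (gen0 x); rewrite addr0. Qed.
Lemma gen_add x u v : gen x u -> gen x v -> gen x (u + v).
Proof. by move=> h1 h2; have := g_lin 1 h1 h2; rewrite scale1r. Qed.

Lemma sc_gen x : (forall n : nat, mode om n x = mode x n x) ->
  forall u, gen x u -> forall n : int, 0 <= n -> mode om n u = mode x n u.
Proof.
move=> hx u; elim=> {u}.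
- move=> n n0; have [_ h1] := voa_creation HV (v:=om) I.
  have [_ h2] := voa_creation HV (v:=x) I.
  by rewrite h1 // h2.
- by case=> [k|k] //.
- by move=> a u v _ IHu _ IHv n n0; rewrite !linr IHu // IHv.
- move=> u m v _ IHu _ IHv n n0.
  have [N1 h1] := comm om u v n m.
  have [N2 h2] := comm x u v n m.
  have e1 := h1 _ (leq_maxl N1 N2); have e2 := h2 _ (leq_maxr N1 N2).
  have : mode om n (mode u m v) - mode u m (mode om n v) =
         mode x n (mode u m v) - mode u m (mode x n v).
    rewrite -e1 -e2; apply: eq_bigr => i _; by rewrite IHu.
  by rewrite IHv // => /addIr.
Qed.

Lemma gr_gen x : E 2 x -> forall u, gen x u -> exists s : seq (int * V),
  u = \sum_(y <- s) y.2 /\ forall y, y \in s -> gen x y.2 /\ E y.1 y.2.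
Proof.
move=> Ex u; elim=> {u}.
- exists [:: (0, vac)]; rewrite big_seq1; split => // y; rewrite inE => /eqP -> /=.
  by split; [apply: g_vac | apply: vacE].
- exists [:: (2, x)]; rewrite big_seq1; split => // y; rewrite inE => /eqP -> /=.
  by split; [apply: g_x | apply: Ex].
- move=> a u v _ [su [hu hsu]] _ [sv [hv hsv]].
  exists ([seq (y.1, a *: y.2) | y <- su] ++ sv); split.
    by rewrite big_cat big_map /= -scaler_sumr -hu -hv.
  move=> y; rewrite mem_cat => /orP[/mapP[z zs ->]|ys] /=; last exact: hsv.
  by have [g e] := hsu z zs; split; [apply: gen_scale | apply: E_scale].
- move=> u m v _ [su [hu hsu]] _ [sv [hv hsv]].
  exists [seq (y.1 + z.1 - m - 1, mode y.2 m z.2) | y <- su, z <- sv]; split.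
    rewrite big_allpairs_dep /= hu mode_suml; apply: eq_bigr => y _.
    by rewrite hv mode_sumr.
  move=> y /allpairsP[[y1 z1] [/= y1s z1s ->]] /=.
  have [g1 e1] := hsu y1 y1s; have [g2 e2] := hsv z1 z1s.
  by split; [apply: g_mode | apply: wtE].
Qed.

Lemma binz3 (m : int) c0 : binz F (m + 1) 3 * c0 = (m ^+ 3 - m)%:~R / 12%:R * (2 * c0).
Proof.
rewrite /binz !big_ord_recl big_ord0 !lift0 /=.
have -> : (m ^+ 3 - m) = (m + 1 - 0%:Z) * (m + 1 - 1%:Z) * (m + 1 - 2%:Z) by ring.
rewrite !intrM (_ : 3`! = 6)%N //.
by field.
Qed.

Lemma vir_x x c0 : E 2 x -> mode om 0 x = mode x 0 x -> mode om 1 x = mode x 1 x ->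
  mode x 2 x = 0 -> mode x 3 x = c0 *: vac ->
  (forall n : nat, (4 <= n)%N -> mode x n x = 0) ->
  forall (m n : int) v,
  Lop mode x m (Lop mode x n v) - Lop mode x n (Lop mode x m v) =
  (m - n)%:~R *: Lop mode x (m + n) v +
  (if m + n == 0 then (m ^+ 3 - m)%:~R / 12%:R * (2 * c0) else 0) *: v.
Proof.
move=> Ex h0 h1 h2 h3 h4 m n v.
have [N hN] := comm x x v (m + 1) (n + 1).
have := hN N.+4 (leq_trans (leqnSn N) (leq_trans (leqnSn _) (leq_trans (leqnSn _) (leqnSn _)))).
rewrite !big_ord_recl big1; last first.
  by move=> i _; rewrite !lift0 h4 ?mode0l ?scaler0.
rewrite !lift0 /= addr0 binz0 scale1r -h0 deriv0 h2 mode0l scaler0 add0r.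
rewrite -h1 Ex modeZl h3 modeZl (voa_vacuum HV) // binz1.
rewrite /Lop => <-.
have -> : m + 1 + (n + 1) - 1 = m + n + 1 by lia.
have -> : (m + 1 + (n + 1) - 3%:Z == -1) = (m + n == 0).
  by apply/idP/idP => /eqP h; apply/eqP; lia.
rewrite !scalerA addr0 addrA -scalerDl.
have -> : - (m + 1 + (n + 1))%:~R + (m + 1)%:~R * 2%:~R = (m - n)%:~R :> F.
  by rewrite -intrM -intrN -intrD; congr (_%:~R); lia.
congr (_ + _); case: ifP => _; last by rewrite scaler0 scale0r.
by rewrite binz3.
Qed.

Lemma sc_build x c0 : mode om 1 x = 2%:R *: x ->
  (forall n : nat, mode om n x = mode x n x) ->
  mode x 2 x = 0 -> mode x 3 x = c0 *: vac ->
  (forall n : nat, (4 <= n)%N -> mode x n x = 0) -> Sc mode vac om x.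
Proof.
move=> hD hsc h2 h3 h4.
have Ex : E 2 x by rewrite /E hD.
have scg := sc_gen hsc.
split; first by rewrite L0E.
exists (gen x); split; last by move=> u n hu hn; apply: scg.
constructor.
- by split; [exact: gen0 | move=> a u v hu hv; exact: g_lin].
- exact: g_vac.
- exact: g_x.
- by move=> u n v hu hv; exact: g_mode.
- by move=> a u1 u2 n v _ _ _; exact: linl.
- by move=> a u n v1 v2 _ _ _; exact: linr.
- by move=> u v _ _; exact: (voa_trunc HV (u:=u) (v:=v) I I).
- by move=> n v _; exact: (voa_vacuum HV n (v:=v) I).
- by move=> v _; exact: (voa_creation HV (v:=v) I).
- by move=> u v w _ _ _; exact: (voa_borcherds HV (u:=u) (v:=v) (w:=w) I I I).
- exists (2 * c0) => m n v _.
  apply: vir_x => //; [exact: (hsc 0%N) | exact: (hsc 1%N)].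
- move=> v w n hv _; rewrite /Lop addNr -(scg v hv 0) //; exact: deriv0.
- move=> v hv; have [s [h1 h5]] := gr_gen Ex hv; exists s; split => // y ys.
  have [g e] := h5 y ys; split => //; rewrite Lop0 -(scg _ g) //.
- move=> n; have [s hs] := voa_findim HV n; exists s => v [hv e]; apply: hs.
  by split => //; rewrite L0E (scg _ hv) // -Lop0.
- have [N hN] := voa_bounded HV; exists N => n v hn hv e; apply: (hN n v hn I).
  by rewrite L0E (scg _ hv) // -Lop0.
Qed.

Lemma sc_nec x : Sc mode vac om x ->
  (forall n : nat, mode om n x = mode x n x) /\ mode x 2 x = 0 /\
  (forall n : nat, (4 <= n)%N -> mode x n x = 0) /\ exists c0, mode x 3 x = c0 *: vac.
Proof.
move=> [hD [U [HU hsc]]].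
have Ux := voa_om HU; have Uv := voa_vac HU.
have [c hc] := voa_virasoro HU.
have [cx1 cx2] := voa_creation HV (v:=x) I.
have vv : forall j : nat, (1 <= j)%N ->
    mode x (j.+1)%:Z x = (if j == 2%N then (j%:Z ^+ 3 - j%:Z)%:~R / 12%:R * c else 0) *: vac.
  move=> j hj; have := hc j%:Z (-2) vac Uv.
  rewrite /Lop (_ : -2 + 1 = -1) // cx1 (cx2 (j%:Z + 1)); last by lia.
  rewrite (cx2 (j%:Z - 2 + 1)); last by lia.
  rewrite mode0r subr0 scaler0 add0r (_ : (j%:Z + 1) = j.+1%:Z); last by lia.
  move=> ->; congr (_ *: _); rewrite (_ : (j%:Z - 2 == 0) = (j == 2%N)) //.
  by apply/idP/idP => /eqP h; apply/eqP; lia.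
split; first by move=> n; apply: hsc.
split; first by rewrite (vv 1%N isT) scale0r.
split.
  move=> n hn; have := vv n.-1 ltac:(lia).
  rewrite (_ : n.-1.+1 = n); last by lia.
  by move=> ->; case: eqP => [h|]; [lia | rewrite scale0r].
by eexists; exact: (vv 2%N isT).
Qed.

Section LinF.
Variable phi : V -> F.
Hypothesis hphi : forall a x y, phi (a *: x + y) = a * phi x + phi y.
Lemma phi0 : phi 0 = 0.
Proof.
have := hphi 1 0 0; rewrite scale1r addr0 mul1r => h.
by apply: (addrI (phi 0)); rewrite addr0 -h.
Qed.
Lemma phiD x y : phi (x + y) = phi x + phi y.
Proof. by have := hphi 1 x y; rewrite scale1r mul1r. Qed.
Lemma phiZ a x : phi (a *: x) = a * phi x.
Proof. by have := hphi a x 0; rewrite addr0 phi0 addr0. Qed.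
Lemma phi_sum (I : Type) (r : seq I) (f : I -> V) :
  phi (\sum_(i <- r) f i) = \sum_(i <- r) phi (f i).
Proof.
apply: (big_rec2 (fun x y => phi x = y)); first exact: phi0.
by move=> i x y _ <-; rewrite phiD.
Qed.
End LinF.

Lemma zc_quad (D : V -> Prop) m2 (c : 'I_m2 -> V -> F)
  (hc : forall j a x y, c j (a *: x + y) = a * c j x + c j y)
  w (A : 'I_m2 -> V) (Q : 'I_m2 -> 'I_m2 -> V) :
  (forall j, E w (A j)) -> (forall j k, E w (Q j k)) ->
  zariski_closed_in D (fun x => D x /\
     \sum_(j < m2) c j x *: A j + \sum_(j < m2) \sum_(k < m2) (c j x * c k x) *: Q j k = 0).
Proof.
move=> hA hQ.
have [mw [tw [phw [hlin [htw hrec]]]]] := coord w.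
pose ex x := \sum_(j < m2) c j x *: A j + \sum_(j < m2) \sum_(k < m2) (c j x * c k x) *: Q j k.
have exE : forall x, E w (ex x).
  move=> x; apply: E_add; apply: E_sum => j _; first by apply: E_scale.
  by apply: E_sum => k _; apply: E_scale.
exists mw, (fun l x => \sum_(j < m2) c j x * phw l (A j) +
   \sum_(j < m2) \sum_(k < m2) (c j x * c k x) * phw l (Q j k)).
split.
  move=> l; apply: pf_add.
    apply: (pf_sum (f := fun j x => c j x * phw l (A j))) => j.
    by apply: pf_mul; [apply: pf_lin; apply: hc | apply: pf_const].
  apply: (pf_sum (f := fun j x => \sum_(k < m2) (c j x * c k x) * phw l (Q j k))) => j.
  apply: (pf_sum (f := fun k x => (c j x * c k x) * phw l (Q j k))) => k.
  apply: pf_mul; last exact: pf_const.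
  by apply: pf_mul; apply: pf_lin; apply: hc.
have fE : forall l x, phw l (ex x) = \sum_(j < m2) c j x * phw l (A j) +
   \sum_(j < m2) \sum_(k < m2) (c j x * c k x) * phw l (Q j k).
  move=> l x; rewrite /ex (phiD (hlin l)) !(phi_sum (hlin l)).
  congr (_ + _); first by apply: eq_bigr => j _; rewrite (phiZ (hlin l)).
  apply: eq_bigr => j _; rewrite (phi_sum (hlin l)).
  by apply: eq_bigr => k _; rewrite (phiZ (hlin l)).
move=> x; split.
  move=> [Dx hx]; split => // l; rewrite -fE.
  by rewrite -/(ex x) in hx; rewrite hx (phi0 (hlin l)).
move=> [Dx hl]; split => //; rewrite -/(ex x) (hrec _ (exE x)).
by apply: big1 => l _; rewrite fE hl scale0r.
Qed.

Lemma omE : E 2 om.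
Proof.
have [c hc] := voa_virasoro HV.
have := hc 0 (-2) vac I.
have [co1 co2] := voa_creation HV (v:=om) I.
rewrite /Lop (_ : -2 + 1 = -1) // co1 (co2 (0 + 1)) // mode0r subr0 add0r.
rewrite (_ : (0 - 2 == 0) = false) // scale0r addr0 (_ : 0 - -2 = 2) // => ->.
Qed.

Lemma mode_expand m (t : 'I_m -> V) (a b : 'I_m -> F) n :
  mode (\sum_(j < m) a j *: t j) n (\sum_(k < m) b k *: t k) =
  \sum_(j < m) \sum_(k < m) (a j * b k) *: mode (t j) n (t k).
Proof.
rewrite mode_suml; apply: eq_bigr => j _; rewrite modeZl mode_sumr scaler_sumr.
by apply: eq_bigr => k _; rewrite modeZr scalerA.
Qed.

Lemma psi_ex : exists psi : V -> F,
  (forall a x y, psi (a *: x + y) = a * psi x + psi y) /\ (vac != 0 -> psi vac = 1).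
Proof.
case: (eqVneq vac 0) => [v0|vn0].
  by exists (fun _ => 0); split => // a x y; rewrite mulr0 addr0.
have [m0 [t0 [ph0 [hlin [_ hrec]]]]] := coord 0.
have [j hj] : exists j, ph0 j vac != 0.
  apply: NNPP => hn; move/eqP: vn0; apply.
  rewrite (hrec _ vacE); apply: big1 => j _.
  case: (eqVneq (ph0 j vac) 0) => [->|h]; first by rewrite scale0r.
  by exfalso; apply: hn; exists j.
exists (fun v => ph0 j v / ph0 j vac); split => [a x y|_]; last by rewrite divff.
by rewrite hlin mulrDl mulrA.
Qed.

Lemma DE x : Lop mode om 0 x = 2%:R *: x <-> E 2 x.
Proof. by rewrite L0E. Qed.

Lemma main_zc : zariski_closed_in (fun v => Lop mode om 0 v = 2%:R *: v) (Sc mode vac om).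
Proof.
set D := fun v => Lop mode om 0 v = 2%:R *: v.
have [m2 [t [c [hc [ht hrec]]]]] := coord 2.
have [psi [hpsi hpv]] := psi_ex.
have [N hN] := voa_bounded HV.
set K := absz (3 - N).
have vanish : forall x (n : nat), E 2 x -> (K < n)%N -> mode om n x = 0 /\ mode x n x = 0.
  move=> x n Ex hn.
  have lt : (2 + 2 - n%:Z - 1 < N).
    rewrite /K in hn; lia.
  split; apply: (hN _ _ lt I); rewrite L0E; [exact: (wtE n omE Ex) | exact: (wtE n Ex Ex)].
have mx : forall x n, E 2 x -> mode x n x =
    \sum_(j < m2) \sum_(k < m2) (c j x * c k x) *: mode (t j) n (t k).
  by move=> x n Ex; rewrite -mode_expand -hrec.
have mo : forall x n, E 2 x -> mode om n x = \sum_(j < m2) c j x *: mode om n (t j).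
  move=> x n Ex; rewrite {1}(hrec x Ex) mode_sumr; apply: eq_bigr => j _.
  by rewrite modeZr.
pose S1 (n : nat) x := D x /\ mode om n x = mode x n x.
pose S2 (n : nat) x := D x /\ ((2 <= n)%N && (n != 3%N) -> mode x n x = 0).
pose S3 x := D x /\ mode x 3 x = psi (mode x 3 x) *: vac.
have z1 : forall n, zariski_closed_in D (S1 n).
  move=> n; apply: zc_ext (zc_quad D hc (w := 2 + 2 - n%:Z - 1)
      (A := fun j => mode om n (t j)) (Q := fun j k => - mode (t j) n (t k)) _ _).
  - move=> x; rewrite /S1 /=; case: (classic (D x)) => Dx; last by split => -[].
    have Ex : E 2 x by rewrite -DE.
    have key : \sum_(j < m2) c j x *: mode om n (t j) +
       \sum_(j < m2) \sum_(k < m2) (c j x * c k x) *: - mode (t j) n (t k) =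
       mode om n x - mode x n x.
      rewrite (mo x n Ex) (mx x n Ex); congr (_ + _); rewrite -sumrN.
      apply: eq_bigr => j _; rewrite -sumrN; apply: eq_bigr => k _; exact: scalerN.
    split => -[_ h].
    + by split => //; apply/eqP; rewrite -subr_eq0 -key h.
    + by split => //; rewrite key h subrr.
  - by move=> j; apply: wtE; [apply: omE | apply: ht].
  - by move=> j k; apply: E_opp; apply: wtE; apply: ht.
have z2 : forall n, zariski_closed_in D (S2 n).
  move=> n; case h : ((2 <= n)%N && (n != 3%N)); last first.
    by apply: zc_ext (zc_triv D) => x; rewrite /S2 h; split => [Dx|[]//]; split.
  apply: zc_ext (zc_quad D hc (w := 2 + 2 - n%:Z - 1)
      (A := fun j => 0) (Q := fun j k => mode (t j) n (t k)) _ _).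
  - move=> x; rewrite /S2 h /=; case: (classic (D x)) => Dx; last by split => -[].
    have Ex : E 2 x by rewrite -DE.
    have key : \sum_(j < m2) c j x *: (0 : V) +
       \sum_(j < m2) \sum_(k < m2) (c j x * c k x) *: mode (t j) n (t k) = mode x n x.
      by rewrite big1 ?add0r -?mx // => j _; rewrite scaler0.
    by rewrite key; split => -[_ hh]; split => //; apply: hh.
  - by move=> j; apply: E0.
  - by move=> j k; apply: wtE; apply: ht.
have z3 : zariski_closed_in D S3.
  apply: zc_ext (zc_quad D hc (w := 2 + 2 - 3 - 1)
      (A := fun j => 0) (Q := fun j k => mode (t j) 3 (t k) - psi (mode (t j) 3 (t k)) *: vac) _ _).
  - move=> x; rewrite /S3 /=; case: (classic (D x)) => Dx; last by split => -[].
    have Ex : E 2 x by rewrite -DE.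
    have key : \sum_(j < m2) c j x *: (0 : V) +
       \sum_(j < m2) \sum_(k < m2) (c j x * c k x) *:
         (mode (t j) 3 (t k) - psi (mode (t j) 3 (t k)) *: vac) =
       mode x 3 x - psi (mode x 3 x) *: vac.
      rewrite big1 ?add0r; last by move=> j _; rewrite scaler0.
      rewrite (mx x 3 Ex) (phi_sum hpsi) scaler_suml -sumrB; apply: eq_bigr => j _.
      rewrite (phi_sum hpsi) scaler_suml -sumrB; apply: eq_bigr => k _.
      by rewrite (phiZ hpsi) scalerBr scalerA.
    rewrite key; split => -[_ hh]; split => //.
      by apply/eqP; rewrite -subr_eq0 hh.
    by rewrite -hh subrr.
  - by move=> j; apply: E0.
  - move=> j k; apply: E_add; first by apply: wtE; apply: ht.
    apply: E_opp; apply: E_scale; exact: vacE.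
apply: zc_ext (zc_and (zc_and (zc_all K.+1 z1) (zc_all K.+1 z2)) z3).
move=> x; split.
  move=> [[[Dx H1] [_ H2]] [_ H3]].
  have Ex : E 2 x by rewrite -DE.
  have hsc : forall n : nat, mode om n x = mode x n x.
    move=> n; case: (leqP n K) => hn; first by have [] := H1 n hn.
    by have [-> ->] := vanish x n Ex hn.
  have hz : forall n : nat, (2 <= n)%N -> n != 3%N -> mode x n x = 0.
    move=> n h2 h3; case: (leqP n K) => hn; last by have [_ ->] := vanish x n Ex hn.
    by have [_ ] := H2 n hn; apply; rewrite h2 h3.
  apply: (sc_build (c0 := psi (mode x 3 x))) => //.
  - by apply: hz.
  - by move=> n hn; apply: hz => //; lia.
move=> hS; have Dx : D x by case: hS.
have [hsc [h2 [h4 [c0 h3]]]] := sc_nec hS.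
split; first split.
- by split => // n _; split.
- split => // n _; split => // /andP[hn hn3].
  case: (eqVneq n 2%N) => [->|n2] //; apply: h4; lia.
- split => //; rewrite h3; case: (eqVneq vac 0) => [->|vn0]; first by rewrite !scaler0.
  by rewrite (phiZ hpsi) hpv // mulr1.
Qed.

End VOAproof.

Unset Implicit Arguments.

Theorem theorem1p1 (F : numClosedFieldType) (V : lmodType F)
  (mode : V -> int -> V -> V) (vac om : V) :
  is_VOA mode (fun _ => True) vac om ->
  zariski_closed_in (fun v => Lop mode om 0 v = 2%:R *: v) (Sc mode vac om).
Proof.
move=> H; exact: (main_zc H).
Qed.
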